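(* Let $\Gamma$ be a symmetric, folded, idempotent family of Boolean promise relations such that $\operatorname{AT}_L\notin\operatorname{poly}(\Gamma)$ for some odd positive integer $L$. Then there is a promise relation $(P,Q)$ with $\operatorname{poly}(\Gamma)\subseteq\operatorname{poly}(P,Q)$ of one of the following two forms: either $P=\operatorname{Ham}_k(\{1\})$, $Q=\operatorname{Ham}_k(\{0,1,\dots,k-2,k\})$ for some $k\ge 3$; or $P=\operatorname{Ham}_k(\{0,b\})$, $Q=\operatorname{Ham}_k(\{0,\dots,k-1\})$ for some $k\ge 2$ and $b\in\{1,\dots,k-1\}$.
   Context: Domain $\{0,1\}$. A promise relation is a pair $(P,Q)$ with $P\subseteq Q\subseteq\{0,1\}^k$. $f:\{0,1\}^L\to\{0,1\}$ is a weak polymorphism of $(P,Q)$ if for all $x^{(1)},\dots,x^{(L)}\in P$, $(f(x^{(1)}_1,\dots,x^{(L)}_1),\dots,f(x^{(1)}_k,\dots,x^{(L)}_k))\in Q$; $\operatorname{poly}(\Gamma)$ is the set of functions that are weak polymorphisms of every member of $\Gamma$. $\Gamma$ is symmetric if every relation appearing in it is invariant under coordinate permutations; folded if each $f\in\operatorname{poly}(\Gamma)$ satisfies $f(\bar x)=\neg f(x)$; idempotent if each $f\in\operatorname{poly}(\Gamma)$ satisfies $f(0,\dots,0)=0$, $f(1,\dots,1)=1$. $\operatorname{Ham}_k(S)=\{x\in\{0,1\}^k:|x|\in S\}$ where $|x|$ is the Hamming weight. For odd $L$, $\operatorname{AT}_L(x)=1$ iff $\sum_{i=1}^L(-1)^{i-1}x_i>0$.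 *)

(* Defs.v *)
From mathcomp Require Import all_boot all_order all_algebra all_fingroup.
Set Implicit Arguments. Unset Strict Implicit. Unset Printing Implicit Defensive.
Import GRing.Theory Num.Theory.

(* A family Gamma of promise relations is a predicate: Gamma k P Q holds iff
   (P, Q) (of arity k) is a member of the family. *)
Definition pfamily_t := forall k : nat, {set k.-tuple bool} -> {set k.-tuple bool} -> Prop.

Definition weak_poly (L k : nat) (P Q : {set k.-tuple bool})
  (f : L.-tuple bool -> bool) : Prop :=
  forall x : L.-tuple (k.-tuple bool),
    (forall i : 'I_L, tnth x i \in P) ->
    [tuple f [tuple tnth (tnth x i) j | i < L] | j < k] \in Q.

Definition in_poly (G : pfamily_t) (L : nat) (f : L.-tuple bool -> bool) : Prop :=
  forall k (P Q : {set k.-tuple bool}), G k P Q -> weak_poly P Q f.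

Definition is_promise_family (G : pfamily_t) : Prop :=
  forall k (P Q : {set k.-tuple bool}), G k P Q -> P \subset Q.

Definition permute_tuple k (s : 'S_k) (t : k.-tuple bool) : k.-tuple bool :=
  [tuple tnth t (s i) | i < k].

Definition symmetric_family (G : pfamily_t) : Prop :=
  forall k (P Q : {set k.-tuple bool}), G k P Q ->
    forall (s : 'S_k) (t : k.-tuple bool),
      (t \in P -> permute_tuple s t \in P) /\ (t \in Q -> permute_tuple s t \in Q).

Definition folded_family (G : pfamily_t) : Prop :=
  forall L (f : L.-tuple bool -> bool), in_poly G f ->
    forall x : L.-tuple bool, f (map_tuple negb x) = ~~ f x.

Definition idempotent_family (G : pfamily_t) : Prop :=
  forall L (f : L.-tuple bool -> bool), in_poly G f ->
    f [tuple false | _ < L] = false /\ f [tuple true | _ < L] = true.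

Definition Ham (k : nat) (S : pred nat) : {set k.-tuple bool} :=
  [set t : k.-tuple bool | S (count id t)].

(* Alternating threshold AT_L (x) = 1 iff sum_i (-1)^(i-1) x_i > 0 (1-indexed) *)
Definition AT (L : nat) (x : L.-tuple bool) : bool :=
  (0 < \sum_(i < L) ((-1) ^+ (i : nat) * ((tnth x i : nat)%:Z)))%R.

(* Main.v *)
Require Import Defs.
From mathcomp Require Import all_boot all_order all_algebra all_fingroup.
From mathcomp Require Import zify.
Set Implicit Arguments. Unset Strict Implicit. Unset Printing Implicit Defensive.
From Stdlib Require Import Classical.
Import Order.TTheory GRing.Theory Num.Theory.

Definition gseq (neg : bool) (c d : nat) (x : seq bool) : seq bool :=
  map (xorb neg) x ++ nseq c true ++ nseq d false.
Definition gad (k0 : nat) neg c d (x : seq bool) : k0.-tuple bool :=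
  insubd [tuple false | _ < k0] (gseq neg c d x).

Lemma val_gad k0 neg c d x : size x + c + d = k0 -> val (gad k0 neg c d x) = gseq neg c d x.
Proof.
move=> H; rewrite /gad val_insubd /gseq !size_cat size_map !size_nseq addnA H eqxx //.
Qed.

Lemma count_gseq neg c d x :
  count id (gseq neg c d x) = (if neg then size x - count id x else count id x) + c.
Proof.
rewrite /gseq !count_cat !count_nseq /= mul0n addn0 mul1n count_map.
case: neg => /=; last by [].
have := count_predC id x.
have -> : count (preim (xorb true) id) x = count (predC id) x by apply: eq_count.
lia.
Qed.

Lemma nth_gseq neg c d x j :
  nth false (gseq neg c d x) j = if j < size x then xorb neg (nth false x j) else j < size x + c.
Proof.
rewrite /gseq nth_cat size_map.
case: ifP => hj; first by rewrite (nth_map false).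
rewrite nth_cat size_nseq !nth_nseq if_same.
case: (ltnP (j - size x) c) => h2; apply/esym; [apply/idP|apply/negbTE]; lia.
Qed.

Lemma cmem_true (s : seq bool) : count_mem true s = count id s.
Proof. by apply: eq_count; case. Qed.
Lemma cmem_false (s : seq bool) : count_mem false s = size s - count id s.
Proof.
have := count_predC id s.
have -> : count (predC id) s = count_mem false s by apply: eq_count; case.
lia.
Qed.

Lemma perm_count k (t1 t2 : k.-tuple bool) :
  count id t1 = count id t2 -> exists s : 'S_k, t2 = permute_tuple s t1.
Proof.
move=> H.
have : perm_eq t2 t1.
  apply/allP => b _ /=.
  case: b; first by rewrite !cmem_true H.
  by rewrite !cmem_false !size_tuple H.
case/tuple_permP => p Hp.
exists p; apply: val_inj; rewrite /permute_tuple /= Hp //.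
Qed.

Lemma sum_alt L : (\sum_(i < L) (-1) ^+ (i : nat) = (odd L : nat)%:Z :> int)%R.
Proof.
elim: L => [|L IH]; first by rewrite big_ord0.
rewrite big_ord_recr /= IH -signr_odd.
by case: (odd L).
Qed.

Lemma count_sum k (t : k.-tuple bool) :
  ((count id t : nat)%:Z = \sum_(j < k) ((tnth t j : nat)%:Z))%R.
Proof.
rewrite -sum1_count big_tuple big_mkcond /=.
rewrite (big_morph Posz PoszD (erefl (Posz 0))) /=.
apply: eq_bigr => i _; by case: (tnth t i).
Qed.

Lemma gadget_wp k0 (P Q : {set k0.-tuple bool}) L (f : L.-tuple bool -> bool)
  neg k' c d (P' Q' : {set k'.-tuple bool}) :
  k' + c + d = k0 ->
  weak_poly P Q f ->
  (forall x : L.-tuple bool, f (map_tuple negb x) = ~~ f x) ->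
  f [tuple false | _ < L] = false -> f [tuple true | _ < L] = true ->
  (forall x : k'.-tuple bool, x \in P' -> gad k0 neg c d x \in P) ->
  (forall y : k'.-tuple bool, gad k0 neg c d y \in Q -> y \in Q') ->
  weak_poly P' Q' f.
Proof.
move=> Hk wp fold f0 f1 HP' HQ' x Hx.
apply: HQ'.
set X := [tuple gad k0 neg c d (tnth x i) | i < L].
have HX : forall i, tnth X i \in P by move=> i; rewrite tnth_mktuple; apply: HP'.
have := wp X HX.
set Y := [tuple _ | j < k0].
suff -> : gad k0 neg c d [tuple f [tuple tnth (tnth x i) j | i < L] | j < k'] = Y by [].
apply: eq_from_tnth => j.
rewrite /Y tnth_mktuple (tnth_nth false) val_gad ?size_tuple // nth_gseq size_tuple.
case: ifP => hj.
  set col := [tuple tnth (tnth x i) (Ordinal hj) | i < L].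
  have -> : [tuple tnth (tnth X i) j | i < L] = if neg then map_tuple negb col else col.
    apply: eq_from_tnth => i.
    rewrite tnth_mktuple /X tnth_mktuple (tnth_nth false) val_gad ?size_tuple //.
    rewrite nth_gseq size_tuple hj.
    by case: (neg); rewrite ?tnth_map /col ?tnth_mktuple ?tnth_ord_tuple (tnth_nth false).
  rewrite -[j : nat]/(nat_of_ord (Ordinal hj)) -tnth_nth tnth_mktuple.
  by case: (neg); rewrite ?fold.
have -> : [tuple tnth (tnth X i) j | i < L] = [tuple (j < k' + c) | _ < L].
  apply: eq_from_tnth => i.
  rewrite !tnth_mktuple /X (tnth_nth false) val_gad ?size_tuple //.
  by rewrite nth_gseq size_tuple hj.
by case: (j < k' + c).
Qed.
Lemma count_gad k0 neg c d (x : seq bool) : size x + c + d = k0 ->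
  count id (gad k0 neg c d x) = (if neg then size x - count id x else count id x) + c.
Proof. by move=> H; rewrite val_gad // count_gseq. Qed.

Lemma all_tnth k (t : k.-tuple bool) : (forall j, tnth t j) -> count id t = k.
Proof.
move=> H; apply/eqP; rewrite -{2}(size_tuple t) -all_count.
by apply/allP => b /tnthP [j ->]; apply: H.
Qed.

Lemma none_tnth k (t : k.-tuple bool) : (forall j, ~~ tnth t j) -> count id t = 0.
Proof.
move=> H; apply/eqP; rewrite eqn0Ngt -has_count.
by apply/hasPn => b /tnthP [j ->]; apply: H.
Qed.

Lemma tnth_all k (t : k.-tuple bool) j : count id t = k -> tnth t j.
Proof.
move=> H; have : all id t by rewrite all_count size_tuple H.
by move/allP; apply; apply: mem_tnth.
Qed.

Lemma tnth_none k (t : k.-tuple bool) j : count id t = 0 -> ~~ tnth t j.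
Proof.
move=> H; have : ~~ has id t by rewrite has_count H.
by move/hasPn; apply; apply: mem_tnth.
Qed.
Theorem lemma4p4 (G : pfamily_t) :
  is_promise_family G ->
  symmetric_family G -> folded_family G -> idempotent_family G ->
  (exists L : nat, odd L /\ ~ in_poly G (@AT L)) ->
  (exists k : nat, 3 <= k /\
     forall L (f : L.-tuple bool -> bool), in_poly G f ->
       weak_poly (Ham k (pred1 1)) (Ham k [pred n | (n <= k - 2) || (n == k)]) f)
  \/
  (exists k b : nat, 2 <= k /\ 1 <= b <= k - 1 /\
     forall L (f : L.-tuple bool -> bool), in_poly G f ->
       weak_poly (Ham k [pred n | (n == 0) || (n == b)]) (Ham k [pred n | n <= k - 1]) f).
Proof.
move=> Hpr Hsym Hfold Hidem [L [oddL notAT]].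
have [k0 [P [Q [HG Hnw]]]] : exists k0 (P Q : {set k0.-tuple bool}),
    G k0 P Q /\ ~ weak_poly P Q (@AT L).
  apply: NNPP => H; apply: notAT => k0 P Q HG; apply: NNPP => Hn; apply: H.
  by exists k0, P, Q.
have [x [Hx Hy]] : exists x : L.-tuple (k0.-tuple bool), (forall i, tnth x i \in P) /\
    ~ ([tuple AT [tuple tnth (tnth x i) j | i < L] | j < k0] \in Q).
  apply: NNPP => H; apply: Hnw => x Hx; apply: NNPP => Hn; apply: H; by exists x.
set y0 := [tuple AT _ | j < k0] in Hy.
set t := count id y0.
have HQt : forall Y : k0.-tuple bool, count id Y = t -> Y \notin Q.
  move=> Y HY; apply/negP => YQ; have [s Hs] := perm_count HY.
  by apply: Hy; rewrite Hs; exact: (proj2 (Hsym _ _ _ HG s Y) YQ).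
set r := fun i => count id (tnth x i).
have HPr : forall i (X : k0.-tuple bool), count id X = r i -> X \in P.
  move=> i X HX; have [s Hs] := perm_count (esym HX).
  by rewrite Hs; exact: (proj1 (Hsym _ _ _ HG s _) (Hx i)).
have Hrt : forall i, r i <> t.
  move=> i E; have := HQt (tnth x i) E.
  by rewrite (subsetP (Hpr _ _ _ HG) _ (Hx i)).
have Hrk : forall i, r i <= k0.
  by move=> i; have := count_size id (tnth x i); rewrite size_tuple.
have Htk : t <= k0 by have := count_size id y0; rewrite size_tuple.
have i0 : 'I_L := Ordinal (odd_gt0 oddL).
pose alt j := (\sum_(i < L) (-1) ^+ (i : nat) * ((tnth (tnth x i) j : nat)%:Z))%R.
have Htot : (\sum_(j < k0) alt j = \sum_(i < L) (-1) ^+ (i : nat) * (r i)%:Z)%R.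
  rewrite exchange_big; apply: eq_bigr => i _.
  by rewrite /r count_sum mulr_sumr.
have Hy0 : forall j, tnth y0 j = (0 < alt j)%R.
  move=> j; rewrite /y0 tnth_mktuple /AT /alt; congr (0 < _)%R.
  by apply: eq_bigr => i _; rewrite tnth_mktuple.
have Hconst : (forall i, r i = r i0) -> (\sum_(j < k0) alt j = (r i0)%:Z)%R.
  move=> E; rewrite Htot (eq_bigr (fun i : 'I_L => (-1) ^+ (i : nat) * (r i0)%:Z)%R).
    by rewrite -mulr_suml sum_alt oddL mul1r.
  by move=> i _; rewrite E.
have GAD : forall L' (f : L'.-tuple bool -> bool) neg k' c d (P' Q' : {set k'.-tuple bool}),
    in_poly G f -> k' + c + d = k0 ->
    (forall x : k'.-tuple bool, x \in P' -> gad k0 neg c d x \in P) ->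
    (forall y : k'.-tuple bool, gad k0 neg c d y \in Q -> y \in Q') ->
    weak_poly P' Q' f.
  move=> L' f neg k' c d P' Q' Hf Hk H1 H2.
  apply: (@gadget_wp k0 P Q L' f neg k' c d P' Q' Hk) => //.
  - exact: Hf _ _ _ HG.
  - exact: Hfold _ _ Hf.
  - exact: (proj1 (Hidem _ _ Hf)).
  - exact: (proj2 (Hidem _ _ Hf)).

have cntle : forall kk (y : kk.-tuple bool), count id y <= kk.
  by move=> kk y; have := count_size id y; rewrite size_tuple.
have [t0 | tpos] := eqVneq t 0.
  case: (classic (exists i j, r i < r j)) => [[i [j Hij]] | Hno].
    right; exists (r j), (r j - r i).
    have := Hrt i; have := Hrt j; have := Hrk j; rewrite t0 => ? ? ?.
    split; first lia. split; first lia.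
    move=> L' f Hf.
    apply: (@GAD L' f true (r j) 0 (k0 - r j)) => //; first lia.
      move=> x'; rewrite inE /= => /orP [] /eqP E.
        by apply: (HPr j); rewrite count_gad ?size_tuple ?E; try lia; rewrite size_tuple; lia.
      by apply: (HPr i); rewrite count_gad ?size_tuple ?E; try lia; rewrite size_tuple; lia.
    move=> y Hg; rewrite inE /=; apply: contraTT Hg => Hn.
    apply: HQt; rewrite count_gad ?size_tuple; last by (try lia); rewrite size_tuple; lia.
    have := cntle _ y; rewrite t0; lia.
  exfalso.
  have E : forall i, r i = r i0.
    move=> i; apply/eqP; rewrite eqn_leq; apply/andP; split; rewrite leqNgt; apply/negP => H.
      by apply: Hno; exists i0, i.
    by apply: Hno; exists i, i0.
  have := Hconst E.
  have : (\sum_(j < k0) alt j <= 0)%R.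
    apply: sumr_le0 => j _.
    by have := tnth_none j t0; rewrite Hy0 -leNgt.
  have := Hrt i0; rewrite t0 => ? H1 H2; rewrite H2 in H1; lia.
have [tk | tk] := eqVneq t k0.
  case: (classic (exists i j, r i < r j)) => [[i [j Hij]] | Hno].
    right; exists (k0 - r i), (r j - r i).
    have := Hrt i; have := Hrt j; have := Hrk j; rewrite tk => ? ? ?.
    split; first lia. split; first lia.
    move=> L' f Hf.
    apply: (@GAD L' f false (k0 - r i) (r i) 0) => //; first lia.
      move=> x'; rewrite inE /= => /orP [] /eqP E.
        by apply: (HPr i); rewrite count_gad ?size_tuple ?E; try lia; rewrite size_tuple; lia.
      by apply: (HPr j); rewrite count_gad ?size_tuple ?E; try lia; rewrite size_tuple; lia.
    move=> y Hg; rewrite inE /=; apply: contraTT Hg => Hn.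
    apply: HQt; rewrite count_gad ?size_tuple; last by (try lia); rewrite size_tuple; lia.
    have := cntle _ y; rewrite tk; lia.
  exfalso.
  have E : forall i, r i = r i0.
    move=> i; apply/eqP; rewrite eqn_leq; apply/andP; split; rewrite leqNgt; apply/negP => H.
      by apply: Hno; exists i0, i.
    by apply: Hno; exists i, i0.
  have := Hconst E.
  have : ((k0 : nat)%:Z <= \sum_(j < k0) alt j)%R.
    have -> : ((k0 : nat)%:Z = \sum_(j < k0) 1)%R.
      by rewrite sumr_const card_ord natz.
    apply: ler_sum => j _.
    by have := tnth_all j tk; rewrite Hy0.
  have := Hrt i0; have := Hrk i0; rewrite tk => ? ? H1 H2; rewrite H2 in H1; lia.
have tlt : t < k0 by lia.
case: (classic (exists i, 0 < r i < k0)) => [[i Hi] | Hno].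
  left.
  have := Hrt i => Hit.
  have [ilt | igt] := ltnP (r i) t.
    exists (t - r i + 2); split; first lia.
    move=> L' f Hf.
    apply: (@GAD L' f false (t - r i + 2) (r i - 1) (k0 - t - 1)) => //; first lia.
      move=> x'; rewrite inE /= => /eqP E.
      by apply: (HPr i); rewrite count_gad ?size_tuple ?E; try lia; rewrite size_tuple; lia.
    move=> y Hg; rewrite inE /=; apply: contraTT Hg => Hn.
    apply: HQt; rewrite count_gad ?size_tuple; last by (try lia); rewrite size_tuple; lia.
    have := cntle _ y; lia.
  exists (r i - t + 2); split; first lia.
  move=> L' f Hf.
  apply: (@GAD L' f true (r i - t + 2) (t - 1) (k0 - r i - 1)) => //; first lia.
    move=> x'; rewrite inE /= => /eqP E.
    by apply: (HPr i); rewrite count_gad ?size_tuple ?E; try lia; rewrite size_tuple; lia.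
  move=> y Hg; rewrite inE /=; apply: contraTT Hg => Hn.
  apply: HQt; rewrite count_gad ?size_tuple; last by (try lia); rewrite size_tuple; lia.
  have := cntle _ y; lia.
exfalso.
have Hrow : forall i j, tnth (tnth x i) j = (r i == k0).
  move=> i j.
  have [Ek | Nk] := eqVneq (r i) k0; first exact: tnth_all.
  have E0 : r i = 0.
    by apply: NNPP => H; apply: Hno; exists i; have := Hrk i; lia.
  by apply/negbTE; apply: tnth_none.
have j0 : 'I_k0 := Ordinal tlt.
have Hcol : forall j, tnth y0 j = tnth y0 j0.
  move=> j; rewrite /y0 !tnth_mktuple; congr AT.
  by apply: eq_from_tnth => i; rewrite !tnth_mktuple !Hrow.
case Hb: (tnth y0 j0).
  have : count id y0 = k0 by apply: all_tnth => j; rewrite Hcol Hb.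
  rewrite -/t; lia.
have : count id y0 = 0 by apply: none_tnth => j; rewrite Hcol Hb.
rewrite -/t; lia.
Qed.
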